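(* For every formula $\phi$, if $\vdash_{\mathsf{BB'IW}}\phi$, then $\phi$ is $\Lambda_{\mathrm{NF}}$-inhabited.
   Context: Formulas are built from propositional atoms with $\to$. $\vdash_{\mathsf{BB'IW}}\phi$ means that there is a combinator, built by application from the constants ${\sf B},{\sf B'},{\sf I},{\sf W}$, of type $\phi$, where the constants receive as types all instances of, respectively, $(\chi\to\psi)\to((\phi\to\chi)\to(\phi\to\psi))$, $(\phi\to\chi)\to((\chi\to\psi)\to(\phi\to\psi))$, $\phi\to\phi$, $(\phi\to(\phi\to\chi))\to(\phi\to\chi)$, and an application $MN$ has type $\psi$ when $M$ has type $\chi\to\psi$ and $N$ type $\chi$ (equivalently, $\phi$ is derivable from these axiom schemes by modus ponens). Let $\mathcal X$ be a countably infinite set of variables with an injective map $\mathcal O:\mathcal X\to\mathbb N$; write $x<y$ iff $\mathcal O(x)<\mathcal O(y)$. Terms are terms of pure $\lambda$-calculus over $\mathcal X$, not identified up to $\alpha$-conversion; two distinct $\lambda$'s never bind the same variable and no variable is both free and bound in a term. HRM terms: every variable; $\lambda x.M$ if $M$ is HRM and $x$ is the greatest free variable of $M$; $(MN)$ if $M,N$ are HRM and for each free variable $x$ of $M$ there is a free variable $y$ of $N$ with $x\le y$. Fix $\Omega$ from variables to formulas with $\Omega^{-1}(\phi)$ infinite for all $\phi$. Typing: $x:\Omega(x)$; if $x:\chi$, $M:\psi$ and $\lambda x.M$ is HRM then $\lambda x.M:\chi\to\psi$; if $M:\chi\to\psi$, $N:\chi$, $(MN)$ HRM then $(MN):\psi$.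 $\Lambda_{\mathrm{NF}}$ is the set of typed terms in $\beta$-normal form; $\phi$ is $\Lambda_{\mathrm{NF}}$-inhabited if some closed term of $\Lambda_{\mathrm{NF}}$ has type $\phi$. *)

(* Defs.v *)
From Stdlib Require Import List.
Import ListNotations.
Set Implicit Arguments.

Inductive form : Type :=
| Atom : nat -> form
| Imp : form -> form -> form.

Inductive comb : Type :=
| CB | CB' | CI | CW
| CApp : comb -> comb -> comb.

Inductive ctype : comb -> form -> Prop :=
| ct_B : forall phi chi psi,
    ctype CB (Imp (Imp chi psi) (Imp (Imp phi chi) (Imp phi psi)))
| ct_B' : forall phi chi psi,
    ctype CB' (Imp (Imp phi chi) (Imp (Imp chi psi) (Imp phi psi)))
| ct_I : forall phi, ctype CI (Imp phi phi)
| ct_W : forall phi chi,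
    ctype CW (Imp (Imp phi (Imp phi chi)) (Imp phi chi))
| ct_App : forall M N chi psi,
    ctype M (Imp chi psi) -> ctype N chi -> ctype (CApp M N) psi.

Definition derivable_BBIW (phi : form) : Prop := exists c, ctype c phi.

Section Lambda.
Variable X : Type.
Variable O : X -> nat.      (* the injective map O; x < y iff O x < O y *)
Variable Omega : X -> form.

(** Pure lambda terms over X, not identified up to alpha-conversion. *)
Inductive term : Type :=
| Var : X -> term
| Lam : X -> term -> term
| App : term -> term -> term.

Fixpoint FV (M : term) (x : X) : Prop :=
  match M with
  | Var y => x = y
  | Lam y N => x <> y /\ FV N x
  | App N P => FV N x \/ FV P x
  end.

Fixpoint binders (M : term) : list X :=
  match M with
  | Var _ => []
  | Lam y N => y :: binders N
  | App N P => binders N ++ binders P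
  end.

Definition proper_term (M : term) : Prop :=
  NoDup (binders M) /\ (forall x, FV M x -> ~ In x (binders M)).

Definition closed (M : term) : Prop := forall x, ~ FV M x.

Inductive HRM : term -> Prop :=
| HRM_var : forall x, HRM (Var x)
| HRM_lam : forall x M, HRM M -> FV M x ->
    (forall y, FV M y -> O y <= O x) -> HRM (Lam x M)
| HRM_app : forall M N, HRM M -> HRM N ->
    (forall x, FV M x -> exists y, FV N y /\ O x <= O y) -> HRM (App M N).

Inductive has_type : term -> form -> Prop :=
| ty_var : forall x, has_type (Var x) (Omega x)
| ty_lam : forall x M psi, has_type M psi -> HRM (Lam x M) ->
    has_type (Lam x M) (Imp (Omega x) psi)
| ty_app : forall M N chi psi, has_type M (Imp chi psi) -> has_type N chi ->
    HRM (App M N) -> has_type (App M N) psi.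

Fixpoint beta_normal (M : term) : Prop :=
  match M with
  | Var _ => True
  | Lam _ N => beta_normal N
  | App N P =>
      match N with Lam _ _ => False | _ => True end
      /\ beta_normal N /\ beta_normal P
  end.

Definition NF_inhabited (phi : form) : Prop :=
  exists M, proper_term M /\ closed M /\ beta_normal M /\ has_type M phi.

End Lambda.

Definition infinite_set (X : Type) (P : X -> Prop) : Prop :=
  forall l : list X, exists x, P x /\ ~ In x l.

(* Main.v *)
Require Import Defs.
From Stdlib Require Import List.
From Stdlib Require Import List Lia Arith Classical.
Import ListNotations.

Inductive tm := tvar (i:nat) | tlam (t:tm) | tapp (t u:tm).
Fixpoint occ (t:tm) (i:nat) : Prop :=
  match t with tvar j => i = j | tlam t => occ t i | tapp t u => occ t i \/ occ u i end.
Definition fv d t i := occ t i /\ i < d.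
Fixpoint hrm (d:nat) (t:tm) : Prop :=
  match t with
  | tvar _ => True
  | tlam t => hrm (S d) t /\ occ t d
  | tapp t u => hrm d t /\ hrm d u /\ (forall i, fv d t i -> exists j, fv d u j /\ i <= j)
  end.
Definition isLam t := match t with tlam _ => True | _ => False end.
Fixpoint bn t := match t with tvar _ => True | tlam t => bn t | tapp t u => ~ isLam t /\ bn t /\ bn u end.
Inductive ty : list form -> tm -> form -> Prop :=
| tyv : forall G i A, nth_error G i = Some A -> ty G (tvar i) A
| tyl : forall G t A B, ty (G ++ [A]) t B -> ty G (tlam t) (Imp A B)
| tya : forall G t u A B, ty G t (Imp A B) -> ty G u A -> ty G (tapp t u) B.
Fixpoint hd t : option nat := match t with tvar i => Some i | tlam _ => None | tapp t _ => hd t end.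
Fixpoint fsize (A:form) : nat := match A with Atom _ => 1 | Imp A B => S (fsize A + fsize B) end.
Fixpoint ren (r:nat->nat) t := match t with tvar i => tvar (r i) | tlam t => tlam (ren r t) | tapp t u => tapp (ren r t) (ren r u) end.

Lemma occ_ren r t j : occ (ren r t) j <-> exists i, occ t i /\ r i = j.
Proof.
  induction t; simpl.
  - split; [intros ->; eauto | intros [k [-> <-]]; auto].
  - auto.
  - rewrite IHt1, IHt2. firstorder.
Qed.

Definition ren_ok r n n' := (forall i, i < n -> r i < n') /\ (forall k, r (n+k) = n'+k) /\ (forall i j, i < j -> r i < r j).

Lemma ren_ok_S r n n' : ren_ok r n n' -> ren_ok r (S n) (S n').
Proof.
  intros [H1 [H2 H3]]; repeat split; intros.
  - destruct (Nat.eq_dec i n). subst. specialize (H2 0). rewrite !Nat.add_0_r in H2. lia.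
    specialize (H1 i). lia.
  - specialize (H2 (S k)). rewrite <- !plus_n_Sm in H2. simpl. auto.
  - auto.
Qed.

Lemma fv_ren r n n' t j : ren_ok r n n' -> (fv n' (ren r t) j <-> exists i, fv n t i /\ r i = j).
Proof.
  intros [H1 [H2 H3]]. unfold fv. rewrite occ_ren. split.
  - intros [[i [Hi <-]] Hl]. exists i. repeat split; auto.
    destruct (Nat.lt_ge_cases i n); auto. specialize (H2 (i - n)).
    replace (n + (i - n)) with i in H2 by lia. lia.
  - intros [i [[Hi Hl] <-]]. split; eauto.
Qed.

Lemma mono_le r n n' i j : ren_ok r n n' -> i <= j -> r i <= r j.
Proof. intros [_ [_ H3]] H. destruct (Nat.eq_dec i j). subst; lia. specialize (H3 i j). lia. Qed.

Lemma hrm_ren r t : forall n n', hrm n t -> ren_ok r n n' -> hrm n' (ren r t).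
Proof.
  induction t; simpl; intros n n' H Hr; auto.
  - destruct H as [H Ho]. split. apply (IHt (S n)); auto. apply ren_ok_S; auto.
    apply occ_ren. exists n. split; auto. destruct Hr as [_ [H2 _]]. specialize (H2 0). rewrite !Nat.add_0_r in H2. auto.
  - destruct H as [Ha [Hb Hc]]. split; [apply (IHt1 n n'); auto|split; [apply (IHt2 n n'); auto|]].
    intros i Hi. apply (fv_ren r n n' t1 i Hr) in Hi. destruct Hi as [k [Hk <-]].
    destruct (Hc k Hk) as [j [Hj Hkj]]. exists (r j). split.
    apply (fv_ren r n n' t2 (r j) Hr). eauto. eapply mono_le; eauto.
Qed.

Lemma bn_ren r t : bn t -> bn (ren r t).
Proof. induction t; simpl; intuition. destruct t1; simpl in *; auto. Qed.

Lemma ty_ren r G t A : ty G t A -> forall G', ren_ok r (length G) (length G') ->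
  (forall i, i < length G -> nth_error G' (r i) = nth_error G i) -> ty G' (ren r t) A.
Proof.
  induction 1; intros G' Hr Hn; simpl.
  - constructor. rewrite Hn; auto. apply nth_error_Some. congruence.
  - constructor. apply IHty. rewrite !length_app; simpl.
    rewrite !Nat.add_1_r. apply ren_ok_S; auto.
    rewrite length_app; simpl. intros i Hi. destruct Hr as [H1 [H2 H3]].
    destruct (Nat.lt_ge_cases i (length G)).
    + rewrite !nth_error_app1; auto.
    + assert (i = length G) by lia. subst. specialize (H2 0). rewrite !Nat.add_0_r in H2.
      rewrite H2. rewrite !nth_error_app2 by lia. rewrite !Nat.sub_diag. auto.
  - econstructor; eauto.
Qed.

Lemma hd_size C t X : ty C t X -> forall i Y, hd t = Some i -> nth_error C i = Some Y -> fsize X <= fsize Y.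
Proof.
  induction 1; simpl; intros k Y Hh Hn; try discriminate.
  - inversion Hh; subst. rewrite H in Hn. inversion Hn; subst; lia.
  - specialize (IHty1 k Y Hh Hn). simpl in IHty1. lia.
Qed.

Lemma ty_lt G i A : ty G (tvar i) A -> i < length G /\ nth_error G i = Some A.
Proof. intros H; inversion H; subst. split; auto. apply nth_error_Some; congruence. Qed.

Definition tr (m:nat) (p s : nat -> Prop) (i:nat) := (p i /\ i < m) \/ (p (S i) /\ m <= i) \/ (p m /\ s i).

Lemma tr_cond (p q s : nat -> Prop) m :
  (forall j, s j -> j < m) ->
  (forall i, (p i \/ q i) -> i < m -> exists j, s j /\ i <= j) ->
  (forall i, p i -> exists j, q j /\ i <= j) ->
  forall i, tr m p s i -> exists j, tr m q s j /\ i <= j.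
Proof.
  intros Hs H C i [[Hp Hl]|[[Hp Hl]|[Hp Hsi]]].
  - destruct (C i Hp) as [j [Hq Hij]].
    destruct (lt_eq_lt_dec j m) as [[Hjm|Hjm]|Hjm].
    + exists j. split; [left; auto|auto].
    + subst. destruct (H i (or_introl Hp) Hl) as [k [Hk Hik]]. exists k. split; auto. right; right; auto.
    + exists (j - 1). split; [|lia]. right; left. replace (S (j-1)) with j by lia. split; auto; lia.
  - destruct (C (S i) Hp) as [j [Hq Hij]]. exists (j-1). split; [|lia]. right; left.
    replace (S (j-1)) with j by lia. split; auto; lia.
  - destruct (C m Hp) as [j [Hq Hij]]. destruct (Nat.eq_dec j m).
    + subst. exists i. split; auto. right; right; auto.
    + exists (j-1). specialize (Hs i Hsi). split; [|lia]. right; left.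
      replace (S (j-1)) with j by lia. split; auto; lia.
Qed.
Definition SUBST (A:form) := forall M G D B N,
  ty (G ++ A :: D) M B -> bn M -> hrm (length G + S (length D)) M ->
  ty G N A -> bn N -> hrm (length G) N ->
  (forall i, fv (length G + S (length D)) M i -> i < length G -> exists j, fv (length G) N j /\ i <= j) ->
  exists R, ty (G ++ D) R B /\ bn R /\ hrm (length G + length D) R /\
    (forall i, fv (length G + length D) R i <-> tr (length G) (fv (length G + S (length D)) M) (fv (length G) N) i) /\
    (isLam R -> isLam M \/ hd M = Some (length G)).

Definition APP (A:form) := forall G R Q B,
  ty G R (Imp A B) -> ty G Q A -> bn R -> bn Q -> hrm (length G) R -> hrm (length G) Q ->
  (forall i, fv (length G) R i -> exists j, fv (length G) Q j /\ i <= j) ->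
  exists S, ty G S B /\ bn S /\ hrm (length G) S /\
    (forall i, fv (length G) S i <-> fv (length G) R i \/ fv (length G) Q i).

Definition shift m d i := if i <? m then i else i + d.

Lemma shift_ok m d : ren_ok (shift m d) m (m + d).
Proof.
  unfold shift; repeat split; intros.
  - destruct (Nat.ltb_spec i m); lia.
  - destruct (Nat.ltb_spec (m+k) m); lia.
  - destruct (Nat.ltb_spec i m); destruct (Nat.ltb_spec j m); lia.
Qed.

Lemma tr_ext m p p' s i : (forall k, p k <-> p' k) -> (tr m p s i <-> tr m p' s i).
Proof. intros H. unfold tr. rewrite !H. tauto. Qed.

Lemma subst_of_app A : (forall T, fsize T < fsize A -> APP T) -> SUBST A.
Proof.
  intros IHapp M. induction M as [j|t IHt|P IHP Q IHQ];
    intros G D B N HM Hbn Hh HN HbN HhN HH.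
  -
    apply ty_lt in HM. destruct HM as [Hjl Hnj]. rewrite length_app in Hjl; simpl in Hjl.
    destruct (lt_eq_lt_dec j (length G)) as [[Hjm|Hjm]|Hjm].
    + exists (tvar j). rewrite nth_error_app1 in Hnj by auto.
      split. constructor. rewrite nth_error_app1; auto.
      split. simpl; auto. split. simpl; auto. split.
      * intros i. unfold tr, fv; simpl. split; intros H; [left; lia|]. lia.
      * simpl; tauto.
    + subst j. rewrite nth_error_app2 in Hnj by lia. rewrite Nat.sub_diag in Hnj. simpl in Hnj.
      inversion Hnj; subst B.
      exists (ren (shift (length G) (length D)) N).
      split. eapply ty_ren; eauto. rewrite length_app. apply shift_ok.
      intros i Hi. unfold shift. destruct (Nat.ltb_spec i (length G)); try lia.
      apply nth_error_app1; auto.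
      split. apply bn_ren; auto. split. eapply hrm_ren; eauto. apply shift_ok.
      split.
      * intros i. rewrite (fv_ren _ _ _ _ _ (shift_ok (length G) (length D))).
        unfold tr. split.
        -- intros [k [Hk <-]]. right; right. unfold shift. assert (k < length G) by (destruct Hk; lia).
           destruct (Nat.ltb_spec k (length G)); try lia. split; auto. unfold fv; simpl; split; auto; lia.
        -- intros [[H1 H2]|[[H1 H2]|[H1 H2]]].
           ++ unfold fv in H1; simpl in H1; lia.
           ++ unfold fv in H1; simpl in H1; lia.
           ++ exists i. split; auto. unfold shift. destruct H2. destruct (Nat.ltb_spec i (length G)); lia.
      * right; reflexivity.
    + exists (tvar (j - 1)).
      rewrite nth_error_app2 in Hnj by lia.
      replace (j - length G) with (S (j - 1 - length G)) in Hnj by lia. simpl in Hnj.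
      split. constructor. rewrite nth_error_app2 by lia. auto.
      split. simpl; auto. split. simpl; auto. split.
      * intros i. unfold tr, fv; simpl. split; intros H.
        -- right; left. lia.
        -- lia.
      * simpl; tauto.
  -
    inversion HM; subst. rename A0 into T. rename B0 into B'.
    simpl in Hbn. destruct Hh as [Hh Ho].
    assert (HT : ty (G ++ A :: (D ++ [T])) t B').
    { replace (G ++ A :: D ++ [T]) with ((G ++ A :: D) ++ [T]); auto.
      rewrite <- app_assoc. reflexivity. }

    destruct (IHt G (D ++ [T]) B' N HT Hbn) as [R [HR1 [HR2 [HR3 [HR4 _]]]]]; auto.
    { rewrite length_app; simpl. replace (length G + S (length D + 1)) with (S (length G + S (length D))) by lia. auto. }
    { intros i Hi Hlt. rewrite length_app in Hi; simpl in Hi. apply HH; auto.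
      unfold fv in *; simpl. destruct Hi; split; auto; lia. }
    rewrite length_app in HR3, HR4; simpl in HR3, HR4.
    exists (tlam R). split.
    { constructor. rewrite <- app_assoc. auto. }
    split. simpl; auto. split. simpl. split.
    { replace (S (length G + length D)) with (length G + (length D + 1)) by lia. auto. }
    { assert (fv (length G + (length D + 1)) R (length G + length D)).
      { apply HR4. unfold tr. right; left. split; [|lia]. unfold fv.
        replace (S (length G + length D)) with (length G + S (length D)) by lia. split; auto. lia. }
      destruct H; auto. }
    split.
    + intros i. specialize (HR4 i). unfold tr, fv in *; simpl in *.
      assert (Hm : length G < length G + S (length D)) by lia.
      destruct HR4 as [F Bk]. split; intro X.
      * destruct X as [X1 X2]. destruct F as [[[Y1 Y2] Y3]|[[[Y1 Y2] Y3]|[[Y1 Y2] [Y3 Y4]]]]; [split; auto; lia| | |].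
        -- left. split; [split|]; auto; lia.
        -- right; left. split; [split|]; auto; lia.
        -- right; right. split; [split|]; auto.
      * destruct X as [[[Y1 Y2] Y3]|[[[Y1 Y2] Y3]|[[Y1 Y2] [Y3 Y4]]]].
        -- split; [apply Bk; left; split; [split|]; auto; lia|lia].
        -- split; [apply Bk; right; left; split; [split|]; auto; lia|lia].
        -- split; [apply Bk; right; right; split; [split|]; auto; lia|lia].
    + simpl; tauto.
  -
    inversion HM; subst. rename A0 into T.
    simpl in Hbn. destruct Hbn as [HnlP [HbP HbQ]].
    destruct Hh as [HhP [HhQ HC]].
    assert (Hfapp : forall i, fv (length G + S (length D)) (tapp P Q) i <->
        fv (length G + S (length D)) P i \/ fv (length G + S (length D)) Q i).
    { intros i; unfold fv; simpl; tauto. }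
    destruct (IHP G D (Imp T B) N H2 HbP HhP HN HbN HhN) as [P' [HP1 [HP2 [HP3 [HP4 HP5]]]]].
    { intros i Hi Hl. apply HH; auto. apply Hfapp; auto. }
    destruct (IHQ G D T N H4 HbQ HhQ HN HbN HhN) as [Q' [HQ1 [HQ2 [HQ3 [HQ4 HQ5]]]]].
    { intros i Hi Hl. apply HH; auto. apply Hfapp; auto. }
    assert (HC' : forall i, fv (length G + length D) P' i -> exists j, fv (length G + length D) Q' j /\ i <= j).
    { intros i Hi. apply HP4 in Hi.
      destruct (tr_cond (fv (length G + S (length D)) P) (fv (length G + S (length D)) Q)
                 (fv (length G) N) (length G)) with (i := i) as [j [Hj Hij]]; auto.
      - intros k [_ Hk]; auto.
      - intros k Hk Hl. apply HH; auto. apply Hfapp; auto.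
      - exists j. split; auto. apply HQ4; auto. }
    assert (Hspec : forall i, fv (length G + length D) P' i \/ fv (length G + length D) Q' i <->
             tr (length G) (fv (length G + S (length D)) (tapp P Q)) (fv (length G) N) i).
    { intros i. rewrite HP4, HQ4. rewrite (tr_ext _ _ _ _ _ Hfapp). unfold tr; tauto. }
    destruct (classic (isLam P')) as [HL|HL].
    + destruct (HP5 HL) as [HLP|Hhd]; [contradiction|].
      assert (Hsz : fsize (Imp T B) <= fsize A).
      { apply (hd_size _ _ _ H2 (length G) A Hhd). rewrite nth_error_app2 by lia. rewrite Nat.sub_diag. reflexivity. }
      simpl in Hsz.
      assert (IHT := IHapp T ltac:(lia)). unfold APP in IHT.
      destruct (IHT (G ++ D) P' Q' B) as [S0 [HS1 [HS2 [HS3 HS4]]]];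
        idtac.
      all: rewrite ?length_app in *; auto.
      exists S0. split; auto. split; auto. split; auto. split.
      * intros i. rewrite <- Hspec. auto.
      * intros _. right. simpl. auto.
    + exists (tapp P' Q'). split. econstructor; eauto.
      split. simpl; auto. split. simpl; auto.
      split. intros i. rewrite <- Hspec. unfold fv; simpl; tauto.
      simpl; tauto.
Qed.

Lemma app_of_subst A : SUBST A -> APP A.
Proof.
  intros HS G R Q B HR HQ HbR HbQ HhR HhQ HC.
  destruct R as [j|P0|R1 R2].
  - exists (tapp (tvar j) Q). split. econstructor; eauto. split. simpl; auto.
    split. simpl; auto. intros i; unfold fv; simpl; tauto.
  - inversion HR; subst. simpl in HbR. destruct HhR as [HhP Ho].
    unfold SUBST in HS.
    destruct (HS P0 G [] B Q H2 HbR) as [S0 [HS1 [HS2 [HS3 [HS4 _]]]]]; simpl; auto.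
    all: try (replace (length G + 1) with (S (length G)) by lia; auto).
    all: try (intros i Hi Hl; apply HC; unfold fv in *; simpl; destruct Hi; auto).
    rewrite app_nil_r in HS1. rewrite Nat.add_0_r in HS3, HS4.
    exists S0. split; auto. split; auto. split; auto. intros i. rewrite HS4.
    unfold tr, fv; simpl. split.
    + intros [[[a1 a2] a3]|[[[a1 a2] a3]|[[a1 a2] a3]]]; auto. lia.
    + intros [[a1 a2]|a1]. left. split; auto. split; auto. lia.
      right; right. split; auto. split; auto. lia.
  - exists (tapp (tapp R1 R2) Q). split. econstructor; eauto. split. simpl; auto.
    split. simpl; auto. intros i; unfold fv; simpl; tauto.
Qed.

Lemma all_app : forall A, APP A.
Proof.
  assert (forall s A, fsize A <= s -> APP A).
  { induction s; intros A HA.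
    - destruct A; simpl in HA; lia.
    - apply app_of_subst. apply subst_of_app. intros T HT. apply IHs. lia. }
  intros A. apply (H (fsize A)). auto.
Qed.

Definition Inh A := exists t, ty [] t A /\ bn t /\ hrm 0 t.

Lemma inh_mp A B : Inh (Imp A B) -> Inh A -> Inh B.
Proof.
  intros [t [H1 [H2 H3]]] [u [U1 [U2 U3]]].
  destruct (all_app A [] t u B) as [S0 [S1 [S2 [S3 _]]]]; auto.
  intros i [_ Hi]; simpl in Hi; lia.
  exists S0; auto.
Qed.

Lemma inh_comb c A : ctype c A -> Inh A.
Proof.
  induction 1.
  - exists (tlam (tlam (tlam (tapp (tvar 0) (tapp (tvar 1) (tvar 2)))))).
    split. repeat econstructor.
    split. simpl. tauto.
    simpl. unfold fv; simpl. repeat split; auto.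
    + intros i [Hi _]; subst. exists 2; lia.
    + intros i [Hi _]; subst. exists 1; lia.
  - exists (tlam (tlam (tlam (tapp (tvar 1) (tapp (tvar 0) (tvar 2)))))).
    split. repeat econstructor.
    split. simpl. tauto.
    simpl. unfold fv; simpl. repeat split; auto.
    + intros i [Hi _]; subst. exists 2; lia.
    + intros i [Hi _]; subst. exists 2; lia.
  - exists (tlam (tvar 0)). split. repeat econstructor. simpl. auto.
  - exists (tlam (tlam (tapp (tapp (tvar 0) (tvar 1)) (tvar 1)))).
    split. repeat econstructor.
    split. simpl. tauto.
    simpl. unfold fv; simpl. repeat split; auto.
    + intros i [Hi _]; subst. exists 1; lia.
    + intros i [Hi _]; subst. exists 1; lia.
  - eapply inh_mp; eauto.
Qed.

Section Trans.
Variable X : Type.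
Variable O : X -> nat.
Hypothesis O_inj : forall x y : X, O x = O y -> x = y.
Variable Omega : X -> form.
Hypothesis Omega_inf : forall phi : form, infinite_set (fun x => Omega x = phi).

Lemma many phi b : exists l : list X, NoDup l /\ length l = b /\ (forall x, In x l -> Omega x = phi).
Proof.
  induction b.
  - exists []. split. constructor. split; auto. intros x [].
  - destruct IHb as [l [H1 [H2 H3]]]. destruct (Omega_inf phi l) as [x [Hx Hn]].
    exists (x :: l). split. constructor; auto. split. simpl; auto.
    intros y [<-|Hy]; auto.
Qed.

Lemma nodup_map (l : list X) : NoDup l -> NoDup (map O l).
Proof.
  induction 1; simpl; constructor; auto.
  intros Hin. apply in_map_iff in Hin. destruct Hin as [y [Hy Hin]].
  apply O_inj in Hy. subst; contradiction.
Qed.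

Lemma fresh phi b : exists x, Omega x = phi /\ b <= O x.
Proof.
  destruct (many phi (S b)) as [l [H1 [H2 H3]]].
  destruct (classic (exists x, In x l /\ b <= O x)) as [[x [Hx Hb]]|Hn].
  - exists x; auto.
  - exfalso. assert (incl (map O l) (seq 0 b)).
    { intros n Hn'. apply in_map_iff in Hn'. destruct Hn' as [x [<- Hx]].
      apply in_seq. split; [lia|]. simpl. destruct (Nat.lt_ge_cases (O x) b); auto.
      exfalso; apply Hn; eauto. }
    apply NoDup_incl_length in H; [|apply nodup_map; auto].
    rewrite length_map, length_seq in H. lia.
Qed.

Definition isLamN (M : term X) := match M with Lam _ _ => True | _ => False end.

Lemma nth_app_cases (l : list X) x i y : nth_error (l ++ [x]) i = Some y ->
  (i < length l /\ nth_error l i = Some y) \/ (i = length l /\ y = x).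
Proof.
  intros H. destruct (Nat.lt_ge_cases i (length l)).
  - left. rewrite nth_error_app1 in H; auto.
  - right. rewrite nth_error_app2 in H by auto. destruct (i - length l) eqn:E.
    + simpl in H. inversion H. split; auto. lia.
    + simpl in H. destruct n; discriminate.
Qed.

Lemma trans t G A : ty G t A -> bn t -> hrm (length G) t ->
  forall (e : list X) b, length e = length G ->
  (forall i x, nth_error e i = Some x -> nth_error G i = Some (Omega x)) ->
  (forall i j x y, nth_error e i = Some x -> nth_error e j = Some y -> i < j -> O x < O y) ->
  (forall i x, nth_error e i = Some x -> O x < b) ->
  exists M b', has_type O Omega M A /\ HRM O M /\ beta_normal M /\ NoDup (binders M) /\
    (forall x, In x (binders M) -> b <= O x < b') /\ b <= b' /\
    (forall x, FV M x <-> exists i, fv (length G) t i /\ nth_error e i = Some x) /\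
    (isLamN M -> isLam t).
Proof.
  induction 1; intros Hbn Hh e b Hl He Hmono Hb.
  -
    assert (Hi : i < length e) by (rewrite Hl; apply nth_error_Some; congruence).
    destruct (nth_error e i) as [x|] eqn:Ex; [|apply nth_error_Some in Hi; contradiction].
    assert (HA : A = Omega x) by (specialize (He i x Ex); congruence). subst A.
    exists (Var x), b. split. apply ty_var. split. apply HRM_var. split. simpl; auto.
    split. simpl; constructor. split. simpl; tauto. split. auto. split.
    + intros y. simpl. split.
      * intros ->. exists i. unfold fv; simpl. split; auto. split; auto. lia.
      * intros [k [[Hk _] Hk2]]. simpl in Hk. subst. congruence.
    + simpl; tauto.
  -
    simpl in Hbn. destruct Hh as [Hh Ho].
    destruct (fresh A b) as [x [Hx Hbx]].
    assert (Hlen : length (G ++ [A]) = S (length G)) by (rewrite length_app; simpl; lia).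
    assert (He' : forall i y, nth_error (e ++ [x]) i = Some y -> nth_error (G ++ [A]) i = Some (Omega y)).
    { intros i y Hy. apply nth_app_cases in Hy. destruct Hy as [[Hi Hy]|[Hi ->]].
      - rewrite nth_error_app1 by lia. auto.
      - rewrite nth_error_app2 by lia. replace (i - length G) with 0 by lia. simpl. congruence. }
    assert (Hmono' : forall i j y z, nth_error (e ++ [x]) i = Some y -> nth_error (e ++ [x]) j = Some z -> i < j -> O y < O z).
    { intros i j y z Hy Hz Hij. apply nth_app_cases in Hy. apply nth_app_cases in Hz.
      destruct Hy as [[Hi Hy]|[Hi ->]]; destruct Hz as [[Hj Hz]|[Hj ->]].
      - eauto.
      - specialize (Hb _ _ Hy). lia.
      - lia.
      - lia. }
    assert (Hb' : forall i y, nth_error (e ++ [x]) i = Some y -> O y < S (O x)).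
    { intros i y Hy. apply nth_app_cases in Hy. destruct Hy as [[Hi Hy]|[Hi ->]].
      - specialize (Hb _ _ Hy). lia.
      - lia. }
    destruct (IHty Hbn ltac:(rewrite Hlen; auto) (e ++ [x]) (S (O x))
               ltac:(rewrite !length_app; simpl; lia) He' Hmono' Hb')
      as [M [b' [M1 [M2 [M3 [M4 [M5 [M6 [M7 M8]]]]]]]]].
    rewrite Hlen in M7.
    assert (HFVx : FV M x).
    { apply M7. exists (length G). split. split; auto. rewrite nth_error_app2 by lia.
      replace (length G - length e) with 0 by lia. reflexivity. }
    assert (HFVe : forall y, FV M y -> y = x \/ O y < b).
    { intros y Hy. apply M7 in Hy. destruct Hy as [i [_ Hi]]. apply nth_app_cases in Hi.
      destruct Hi as [[_ Hi]|[_ ->]]; eauto. }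
    assert (HRl : HRM O (Lam x M)).
    { apply HRM_lam; auto. intros y Hy. destruct (HFVe y Hy) as [->|Hy']; lia. }
    exists (Lam x M), b'. split.
    { rewrite <- Hx. apply ty_lam; auto. }
    split; auto. split. simpl; auto. split.
    { simpl. constructor; auto. intros Hin. specialize (M5 x Hin). lia. }
    split.
    { intros y [<-|Hy]. lia. specialize (M5 y Hy). lia. }
    split. lia.
    split.
    + intros y. simpl. split.
      * intros [Hne Hy]. apply M7 in Hy. destruct Hy as [i [[Hoc Hi] Hiy]].
        apply nth_app_cases in Hiy. destruct Hiy as [[Hi' Hiy]|[_ ->]]; [|congruence].
        exists i. split; auto. split; auto. lia.
      * intros [i [[Hoc Hi] Hiy]]. split.
        -- intros ->. specialize (Hb _ _ Hiy). lia.
        -- apply M7. exists i. split. split; auto. rewrite nth_error_app1 by lia. auto.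
    + simpl; auto.
  -
    simpl in Hbn. destruct Hbn as [Hnl [Hb1 Hb2]]. destruct Hh as [Hh1 [Hh2 HC]].
    destruct (IHty1 Hb1 Hh1 e b Hl He Hmono Hb)
      as [M1 [b1 [M11 [M12 [M13 [M14 [M15 [M16 [M17 M18]]]]]]]]].
    assert (Hb1' : forall i x, nth_error e i = Some x -> O x < b1) by (intros; specialize (Hb _ _ H1); lia).
    destruct (IHty2 Hb2 Hh2 e b1 Hl He Hmono Hb1')
      as [M2 [b2 [M21 [M22 [M23 [M24 [M25 [M26 [M27 M28]]]]]]]]].
    assert (HRa : HRM O (App M1 M2)).
    { apply HRM_app; auto. intros x Hx. apply M17 in Hx. destruct Hx as [i [Hi Hix]].
      destruct (HC i Hi) as [j [Hj Hij]].
      assert (Hjl : j < length e) by (destruct Hj; lia).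
      destruct (nth_error e j) as [y|] eqn:Ey; [|apply nth_error_Some in Hjl; contradiction].
      exists y. split. apply M27. eauto.
      destruct (Nat.eq_dec i j). subst. rewrite Hix in Ey. inversion Ey; subst; lia.
      assert (O x < O y) by (apply (Hmono i j); auto; lia). lia. }
    exists (App M1 M2), b2. split. eapply ty_app; eauto. split; auto. split.
    { simpl. split; [|split; auto]. destruct M1; simpl in M18 |- *; auto. }
    split.
    { simpl. apply NoDup_app; auto. intros a Ha1 Ha2. specialize (M15 a Ha1). specialize (M25 a Ha2). lia. }
    split.
    { intros a Ha. simpl in Ha. apply in_app_or in Ha. destruct Ha as [Ha|Ha].
      specialize (M15 a Ha). lia. specialize (M25 a Ha). lia. }
    split. lia.
    split.
    + intros y. simpl. rewrite M17, M27. unfold fv; simpl. split.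
      * intros [[i [[H1' H2'] H3']]|[i [[H1' H2'] H3']]]; exists i; auto.
      * intros [i [[[H1'|H1'] H2'] H3']]; [left|right]; exists i; auto.
    + simpl; tauto.
Qed.

End Trans.

Theorem lemma1p7 (X : Type) (O : X -> nat)
  (O_inj : forall x y : X, O x = O y -> x = y)
  (Omega : X -> form)
  (Omega_inf : forall phi : form, infinite_set (fun x => Omega x = phi))
  (phi : form) :
  derivable_BBIW phi -> NF_inhabited O Omega phi.
Proof.
  intros [c Hc]. destruct (inh_comb c phi Hc) as [t [H1 [H2 H3]]].
  destruct (trans X O O_inj Omega Omega_inf t [] phi H1 H2 H3 [] 0) as
    [M [b' [M1 [M2 [M3 [M4 [M5 [M6 [M7 _]]]]]]]]]; auto.
  - intros i x Hx. destruct i; discriminate.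
  - intros i j x y Hx. destruct i; discriminate.
  - intros i x Hx. destruct i; discriminate.
  - exists M. split; [|split; [|split; auto]].
    + split; auto. intros x Hx. apply M7 in Hx. destruct Hx as [i [[_ Hi] _]]. simpl in Hi; lia.
    + intros x Hx. apply M7 in Hx. destruct Hx as [i [[_ Hi] _]]. simpl in Hi; lia.
Qed.
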